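(* Under assumptions (A1)–(A6), for (almost) every $x$ such that $P(Y(1)=1,M(1)=0\mid X=x)>0$, $$\zeta'(x)=1-\frac{\mu_{00}(x)}{\mu_{10}(x)},\qquad \delta'(x)=\zeta'(x),\qquad \psi'(x)=0.$$
   Context: Observed data $O=(X,A,M,Y)$ with covariates $X\in\mathbb{R}^d$, binary exposure $A$, binary mediator $M$, binary outcome $Y$. For $a,m\in\{0,1\}$, $Y(a,m)$ is the potential outcome under $A=a,M=m$, $M(a)$ the potential mediator, $Y(a):=Y(a,M(a))$, cross-world $Y(a,M(a'))$ by substitution, all on a common probability space with $O$. $\mu_{am}(x)=P(Y=1\mid A=a,M=m,X=x)$. Define $\delta'(x)=P(Y(0)=0\mid Y(1,M(1))=1,M(1)=0,X=x)$, $\psi'(x)=P(Y(1,M(0))=0,\,Y(0,M(0))=0\mid Y(1,M(1))=1,M(1)=0,X=x)$, $\zeta'(x)=P(Y(1,M(0))=1,\,Y(0,M(0))=0\mid Y(1,M(1))=1,M(1)=0,X=x)$. Assumptions: (A1) $A=a,M=m\Rightarrow Y=Y(a,m)$ and $A=a\Rightarrow M=M(a)$. (A2) $Y(1,1)\ge Y(1,0)\ge Y(0,0)$, $Y(1,1)\ge Y(0,1)$, $M(1)\ge M(0)$. (A3) $A\perp\{Y(1,1),Y(1,0),Y(0,1),Y(0,0),M(1),M(0)\}\mid X$. (A4) $\{Y(1,1),Y(1,0),Y(0,1),Y(0,0)\}\perp\{M(1),M(0)\}\mid X$. (A5) for some $\epsilon>0$, $P\{\min_{a,m}P(A=a,M=m\mid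 X)\ge\epsilon\}=1$. (A6) $P\{P(Y=1\mid A=1,M=1,X)\ge\epsilon\}=1$. *)

(* Defs.v *)
From HB Require Import structures.
From mathcomp Require Import all_boot all_order all_algebra.
From mathcomp Require Import all_classical all_reals all_analysis.
Set Implicit Arguments. Unset Strict Implicit. Unset Printing Implicit Defensive.
Import Order.TTheory GRing.Theory Num.Theory.
Local Open Scope classical_set_scope.
Local Open Scope ring_scope.

(* The joint value ("profile") of all the binary variables of a unit:
   observed A, M, Y and the potential mediators M(0), M(1) and potential
   outcomes Y(0,0), Y(0,1), Y(1,0), Y(1,1). *)
Record profile := Profile {
  pA : bool; pM : bool; pY : bool;
  pM0 : bool; pM1 : bool;
  pY00 : bool; pY01 : bool; pY10 : bool; pY11 : bool }.

Definition profile_enc (u : profile) :=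
  (pA u, pM u, pY u, pM0 u, pM1 u, pY00 u, pY01 u, pY10 u, pY11 u).
Definition profile_dec
  (t : bool * bool * bool * bool * bool * bool * bool * bool * bool) : profile :=
  let: (a, m, y, m0, m1, y00, y01, y10, y11) := t in
  Profile a m y m0 m1 y00 y01 y10 y11.
Lemma profile_encK : cancel profile_enc profile_dec. Proof. by case. Qed.
HB.instance Definition _ := Finite.copy profile (can_type profile_encK).

(* M(a) and Y(a,m) read off a profile; cross-world Y(a, M(a')) by substitution *)
Definition pMa (u : profile) (a : bool) : bool := if a then pM1 u else pM0 u.
Definition pYam (u : profile) (a m : bool) : bool :=
  match a, m with
  | false, false => pY00 u | false, true => pY01 u
  | true, false => pY10 u | true, true => pY11 u end.
Definition pYc (u : profile) (a a' : bool) : bool := pYam u a (pMa u a').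

Definition profile_of {Omega : Type} (A M Y : Omega -> bool)
  (Mp : bool -> Omega -> bool) (Yp : bool -> bool -> Omega -> bool)
  (w : Omega) : profile :=
  Profile (A w) (M w) (Y w) (Mp false w) (Mp true w)
    (Yp false false w) (Yp false true w) (Yp true false w) (Yp true true w).

Section condprob.
Context {R : realType} {T : Type}.
Definition cp (kappa : T -> profile -> R) (x : T) (p : pred profile) : R :=
  \sum_(u | p u) kappa x u.
Definition ccp (kappa : T -> profile -> R) (x : T) (p q : pred profile) : R :=
  cp kappa x [pred u | p u && q u] / cp kappa x q.
End condprob.

Section cond.
Context {R : realType} {d dT : measure_display} {Omega : measurableType d}
  {T : measurableType dT}.

(* kappa is a regular conditional distribution of the (finite-valued) random
   variable V given X:  kappa x u = P(V = u | X = x). *)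
Definition is_rcd (P : probability Omega R) (X : Omega -> T)
  (V : Omega -> profile) (kappa : T -> profile -> R) : Prop :=
  [/\ (forall x u, 0 <= kappa x u),
      (forall x, \sum_(u : profile) kappa x u = 1),
      (forall u, measurable_fun setT (fun x => kappa x u)) &
      (forall u (B : set T), measurable B ->
         P (X @^-1` B `&` V @^-1` [set u]) =
         (\int[P]_(w in X @^-1` B) (kappa (X w) u)%:E)%E)].


Definition cond_indep (P : probability Omega R) (X : Omega -> T)
  (kappa : T -> profile -> R) (T1 T2 : eqType)
  (f : profile -> T1) (g : profile -> T2) : Prop :=
  {ae P, forall w, forall (a : T1) (b : T2),
     cp kappa (X w) [pred u | (f u == a) && (g u == b)] =
     cp kappa (X w) [pred u | f u == a] * cp kappa (X w) [pred u | g u == b]}.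
End cond.

Definition ev_cond : pred profile := [pred u | pYc u true true && ~~ pMa u true].

Section quantities.
Context {R : realType} {T : Type} (kappa : T -> profile -> R).
Definition mu (a m : bool) (x : T) : R :=
  ccp kappa x [pred u | pY u] [pred u | (pA u == a) && (pM u == m)].
(* delta'(x) = P(Y(0) = 0 | Y(1,M(1)) = 1, M(1) = 0, X = x), Y(0) = Y(0,M(0)) *)
Definition delta' (x : T) : R :=
  ccp kappa x [pred u | ~~ pYc u false false] ev_cond.
Definition psi' (x : T) : R :=
  ccp kappa x [pred u | ~~ pYc u true false && ~~ pYc u false false] ev_cond.
Definition zeta' (x : T) : R :=
  ccp kappa x [pred u | pYc u true false && ~~ pYc u false false] ev_cond.
End quantities.

(* Main.v *)
Require Import Defs.
From HB Require Import structures.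
From mathcomp Require Import all_boot all_order all_algebra.
From mathcomp Require Import all_classical all_reals all_analysis.
From mathcomp Require Import measurable_realfun.
From mathcomp Require Import ring.
Import Order.TTheory GRing.Theory Num.Theory.
Local Open Scope classical_set_scope.
Local Open Scope ring_scope.

Definition good (u : profile) : bool :=
  [&& pY u == pYam u (pA u) (pM u), pM u == pMa u (pA u),
      (pY10 u <= pY11 u)%N, (pY00 u <= pY10 u)%N, (pY01 u <= pY11 u)%N &
      (pM0 u <= pM1 u)%N].

Lemma ae_bad_zero (R : realType) (d dT : measure_display)
  (Omega : measurableType d) (T : measurableType dT) (P : probability Omega R)
  (X : Omega -> T) (V : Omega -> profile) (kappa : T -> profile -> R)
  (mX : measurable_fun setT X) :
  is_rcd P X V kappa -> (forall w, good (V w)) ->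
  {ae P, forall w, forall u, ~~ good u -> kappa (X w) u = 0}.
Proof.
move=> [k0 _ km kint] gV.
apply: filter_forall => u.
case: (boolP (good u)) => gu.
  by apply: aeW.
have mf : measurable_fun [set: Omega] (EFin \o (fun w => kappa (X w) u)).
  by apply/measurable_EFinP; exact: (measurableT_comp (km u) mX).
have := kint u setT measurableT.
rewrite preimage_setT setTI.
have -> : V @^-1` [set u] = set0.
  by apply/seteqP; split => // w /= Vw; move: (gV w); rewrite Vw (negbTE gu).
rewrite measure0 => /esym H.
have : (\int[P]_(w in setT) `|(kappa (X w) u)%:E| = 0)%E.
  by rewrite -H; apply: eq_integral => w _; rewrite gee0_abs // lee_fin.
move/(ae_eq_integral_abs _ measurableT mf).
apply: filterS => w /(_ I) /= [] ->.
by [].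
Qed.

Ltac brute := move=> [[] [] [] [] [] [] [] [] []] //=.

Section alg.
Context {R : realType} {T : Type} (kappa : T -> profile -> R) (x : T).
Hypothesis kb : forall u, ~~ good u -> kappa x u = 0.
Local Notation Pr := (cp kappa x).

Lemma cp_ext (p q : pred profile) :
  (forall u, good u -> p u = q u) -> Pr p = Pr q.
Proof.
move=> H; rewrite /cp [LHS]big_mkcond [RHS]big_mkcond; apply: eq_bigr => u _.
case: (boolP (good u)) => g; first by rewrite H.
by rewrite kb // !if_same.
Qed.

Lemma cp_split (p q : pred profile) :
  Pr p = Pr [pred u | p u && q u] + Pr [pred u | p u && ~~ q u].
Proof. by rewrite /cp (bigID q). Qed.

Lemma cp_false : Pr [pred u | false] = 0.
Proof. by rewrite /cp big_pred0. Qed.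

Lemma cp_indep (T1 T2 : finType) (f : profile -> T1) (g : profile -> T2) :
  (forall a b, Pr [pred u | (f u == a) && (g u == b)] =
               Pr [pred u | f u == a] * Pr [pred u | g u == b]) ->
  forall (S1 : pred T1) (S2 : pred T2),
  Pr [pred u | S1 (f u) && S2 (g u)] = Pr [pred u | S1 (f u)] * Pr [pred u | S2 (g u)].
Proof.
move=> H S1 S2.
have marg (T3 : finType) (h : profile -> T3) (S : pred T3) :
    Pr [pred u | S (h u)] = \sum_(a | S a) Pr [pred u | h u == a].
  rewrite /cp (partition_big h S) //; apply: eq_bigr => a Sa.
  by apply: eq_bigl => u /=; case: eqP => [->|]; rewrite ?andbF // Sa.
rewrite (marg _ f) (marg _ g) mulr_suml.
rewrite /cp (partition_big f S1) /=; last by move=> u /andP[].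
apply: eq_bigr => a Sa; rewrite mulr_sumr.
rewrite (partition_big g S2) /=; last by move=> u /andP[/andP[]].
apply: eq_bigr => b Sb; rewrite -H /cp.
apply: eq_bigl => u /=.
by case: (f u =P a) => [->|]; case: (g u =P b) => [->|]; rewrite ?Sa ?Sb ?andbF.
Qed.

Lemma cp_indep' (T1 T2 : finType) (f : profile -> T1) (g : profile -> T2) :
  (forall a b, Pr [pred u | (f u == a) && (g u == b)] =
               Pr [pred u | f u == a] * Pr [pred u | g u == b]) ->
  forall (S1 : pred T1) (S2 : pred T2) (p p1 p2 : pred profile),
  (forall u, good u -> p u = S1 (f u) && S2 (g u)) ->
  (forall u, good u -> p1 u = S1 (f u)) ->
  (forall u, good u -> p2 u = S2 (g u)) ->
  Pr p = Pr p1 * Pr p2.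
Proof.
move=> H S1 S2 p p1 p2 h h1 h2.
rewrite (cp_ext _ _ h) (cp_ext _ _ h1) (cp_ext _ _ h2); exact: cp_indep.
Qed.
End alg.

Section point.
Context {R : realType} {T : Type} (kappa : T -> profile -> R) (x : T).
Hypothesis kb : forall u, ~~ good u -> kappa x u = 0.
Hypothesis H4 : forall (a : bool * bool * bool * bool) (b : bool * bool),
  cp kappa x
    [pred u | (pY11 u, pY10 u, pY01 u, pY00 u) == a & (pM1 u, pM0 u) == b] =
  cp kappa x [pred u | (pY11 u, pY10 u, pY01 u, pY00 u) == a] *
  cp kappa x [pred u | (pM1 u, pM0 u) == b].
Hypothesis H3 : forall (a : bool) (b : bool * bool * bool * bool * bool * bool),
  cp kappa x
    [pred u | pA u == a & (pY11 u, pY10 u, pY01 u, pY00 u, pM1 u, pM0 u) == b] =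
  cp kappa x [pred u | pA u == a] *
  cp kappa x [pred u | (pY11 u, pY10 u, pY01 u, pY00 u, pM1 u, pM0 u) == b].
Let CE := @cp_ext _ _ kappa x kb.
Let I3 := @cp_indep' _ _ kappa x kb _ _ _ _ H3.
Let I4 := @cp_indep' _ _ kappa x kb _ _ _ _ H4.
Lemma hD : cp kappa x ev_cond = cp kappa x [pred u | pY10 u] * cp kappa x [pred u | ~~ pM1 u].
Proof. by apply: (I4 (fun t => t.1.1.2) (fun t => ~~ t.1)); brute. Qed.
Local Notation Pr := (cp kappa x).
Lemma hN : Pr [pred u | (pYc u true false && ~~ pYc u false false) && ev_cond u]
    = Pr [pred u | pY10 u && ~~ pY00 u] * Pr [pred u | ~~ pM1 u].
Proof. by apply: (I4 (fun t => t.1.1.2 && ~~ t.2) (fun t => ~~ t.1)); brute. Qed.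
Lemma hab : Pr [pred u | pY10 u && ~~ pY00 u] = Pr [pred u | pY10 u] - Pr [pred u | pY00 u].
Proof.
have hsplit := cp_split kappa x [pred u | pY10 u] [pred u | pY00 u].
have hb : Pr [pred u | pY10 u && pY00 u] = Pr [pred u | pY00 u] by apply: CE; brute.
by rewrite hsplit hb addrC addKr.
Qed.
Lemma h00n : Pr [pred u | pY u && ((pA u == false) && (pM u == false))]
    = Pr [pred u | ~~ pA u] * (Pr [pred u | pY00 u] * Pr [pred u | ~~ pM0 u]).
Proof.
transitivity (Pr [pred u | ~~ pA u] * Pr [pred u | pY00 u && ~~ pM0 u]).
  by apply: (I3 (fun a => ~~ a) (fun t => t.1.1.2 && ~~ t.2)); brute.
by congr (_ * _); apply: (I4 (fun t => t.2) (fun t => ~~ t.2)); brute.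
Qed.
Lemma h00d : Pr [pred u | (pA u == false) && (pM u == false)] =
   Pr [pred u | ~~ pA u] * Pr [pred u | ~~ pM0 u].
Proof. by apply: (I3 (fun a => ~~ a) (fun t => ~~ t.2)); brute. Qed.
Lemma h10n : Pr [pred u | pY u && ((pA u == true) && (pM u == false))]
    = Pr [pred u | pA u] * (Pr [pred u | pY10 u] * Pr [pred u | ~~ pM1 u]).
Proof.
transitivity (Pr [pred u | pA u] * Pr [pred u | pY10 u && ~~ pM1 u]).
  by apply: (I3 (fun a => a) (fun t => t.1.1.1.1.2 && ~~ t.1.2)); brute.
by congr (_ * _); apply: (I4 (fun t => t.1.1.2) (fun t => ~~ t.1)); brute.
Qed.
Lemma h10d : Pr [pred u | (pA u == true) && (pM u == false)] =
   Pr [pred u | pA u] * Pr [pred u | ~~ pM1 u].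
Proof. by apply: (I3 (fun a => a) (fun t => ~~ t.1.2)); brute. Qed.
Lemma hpsi : psi' kappa x = 0.
Proof. by rewrite /psi' /ccp (CE _ [pred u | false]) ?cp_false ?mul0r //; brute. Qed.
Lemma hdz : delta' kappa x = zeta' kappa x.
Proof. by rewrite /delta' /zeta' /ccp; congr (_ / _); apply: CE; brute. Qed.
Lemma point_main (eps : R) : 0 < eps ->
  (forall a m, eps <= Pr [pred u | (pA u == a) && (pM u == m)]) ->
  0 < Pr ev_cond ->
  [/\ zeta' kappa x = 1 - mu kappa false false x / mu kappa true false x,
      delta' kappa x = zeta' kappa x & psi' kappa x = 0].
Proof.
move=> e0 Hp hev; split; [|exact: hdz|exact: hpsi].
have p00 := Hp false false; have p10 := Hp true false.
rewrite h00d in p00; rewrite h10d in p10; rewrite hD in hev.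
have n1 : Pr [pred u | ~~ pA u] * Pr [pred u | ~~ pM0 u] != 0.
  by rewrite gt_eqF // (lt_le_trans e0 p00).
have n2 : Pr [pred u | pA u] * Pr [pred u | ~~ pM1 u] != 0.
  by rewrite gt_eqF // (lt_le_trans e0 p10).
have n3 : Pr [pred u | pY10 u] * Pr [pred u | ~~ pM1 u] != 0 by rewrite gt_eqF.
have hm00 : mu kappa false false x = Pr [pred u | pY00 u].
  rewrite /mu /ccp h00n h00d.
  move: n1; set p := Pr _; set q := Pr _; set r := Pr _ => n1.
  by rewrite mulrCA mulfK.
have hm10 : mu kappa true false x = Pr [pred u | pY10 u].
  rewrite /mu /ccp h10n h10d.
  move: n2; set p := Pr _; set q := Pr _; set r := Pr _ => n2.
  by rewrite mulrCA mulfK.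
rewrite hm00 hm10 /zeta' /ccp hN hD hab.
move: n3; set p := Pr _; set q := Pr _; set r := Pr _ => n3.
have pn : p != 0 by move: n3; rewrite mulf_eq0 negb_or => /andP[].
have qn : q != 0 by move: n3; rewrite mulf_eq0 negb_or => /andP[].
field. by rewrite pn qn.
Qed.
End point.
Theorem proposition11 (R : realType) (d : measure_display)
  (Omega : measurableType d) (P : probability Omega R) (k : nat)
  (X : Omega -> k.-tuple R) (A M Y : Omega -> bool)
  (Mp : bool -> Omega -> bool) (Yp : bool -> bool -> Omega -> bool)
  (kappa : k.-tuple R -> profile -> R)
  (mX : measurable_fun setT X) (mA : measurable_fun setT A)
  (mM : measurable_fun setT M) (mY : measurable_fun setT Y)
  (mMp : forall a, measurable_fun setT (Mp a))
  (mYp : forall a m, measurable_fun setT (Yp a m))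
  (Hkappa : is_rcd P X (profile_of A M Y Mp Yp) kappa)
  (* (A1) consistency *)
  (HA1Y : forall w a m, A w = a -> M w = m -> Y w = Yp a m w)
  (HA1M : forall w a, A w = a -> M w = Mp a w)
  (* (A2) monotonicity *)
  (HA2 : forall w, [/\ (Yp true false w <= Yp true true w)%N,
                       (Yp false false w <= Yp true false w)%N,
                       (Yp false true w <= Yp true true w)%N &
                       (Mp false w <= Mp true w)%N])
  (* (A3) A independent of all potential outcomes/mediators given X *)
  (HA3 : cond_indep P X kappa pA
           (fun u => (pY11 u, pY10 u, pY01 u, pY00 u, pM1 u, pM0 u)))
  (* (A4) potential outcomes independent of potential mediators given X *)
  (HA4 : cond_indep P X kappa
           (fun u => (pY11 u, pY10 u, pY01 u, pY00 u))
           (fun u => (pM1 u, pM0 u)))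
  (* (A5), (A6) positivity *)
  (HA56 : exists eps : R, 0 < eps /\
     {ae P, forall w,
       (forall a m, eps <= cp kappa (X w) [pred u | (pA u == a) && (pM u == m)])
       /\ eps <= mu kappa true true (X w)}) :
  {ae P, forall w, 0 < cp kappa (X w) ev_cond ->
     [/\ zeta' kappa (X w) = 1 - mu kappa false false (X w) / mu kappa true false (X w),
         delta' kappa (X w) = zeta' kappa (X w) &
         psi' kappa (X w) = 0]}.
Proof.
have gV : forall w, good (profile_of A M Y Mp Yp w).
  move=> w; rewrite /good /=; case: (HA2 w) => -> -> -> ->; rewrite !andbT.
  have h1 := HA1Y w (A w) (M w) erefl erefl.
  have h2 := HA1M w (A w) erefl.
  by case: (A w) h1 h2 => /= -> ->; case: (Mp _ w) => /=; rewrite !eqxx.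
have Hb := @ae_bad_zero _ _ _ _ _ P X _ kappa mX Hkappa gV.
case: HA56 => eps [e0 Hpos].
apply: filter_app Hb; apply: filter_app HA3; apply: filter_app HA4.
apply: filterS Hpos => w [Hp _] H4 H3 kb.
move: (X w) Hp H4 H3 kb => x Hp H4 H3 kb hev.
exact: (@point_main _ _ kappa x kb H4 H3 eps e0 Hp hev).
Qed.
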